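(* Let $\Sigma$ be a set of prime numbers, $S$ the multiplicative submonoid of $\mathbb{N}$ generated by $\Sigma$. Let $(Q_q)_{q\in\Sigma}$ be a family of locally compact abelian groups such that each $Q_q$ is a topological $\mathbb{Q}_q$-vector space, and for each $q\in\Sigma$ let $Z_q$ be a compact open subgroup of $Q_q$. Then there exists a family $(n_q)_{q\in\Sigma}$ of nonnegative integers such that \[ \prod'_{q\in\Sigma}(Q_q,Z_q)\cong \prod'_{q\in\Sigma}(\mathbb{Q}_q^{n_q},\mathbb{Z}_q^{n_q}) \] as topological $\mathbb{Z}[S^{-1}]$-modules. Moreover, $\prod'_{q\in\Sigma}(Q_q,Z_q)$ has no small $\mathbb{Z}[S^{-1}]$-submodules.
   Context: All topological groups are Hausdorff; $\mathbb{Z}[S^{-1}]\subset\mathbb{Q}$ is the localization (discrete). For locally compact groups $G_q$ with compact open subgroups $H_q$, the restricted product $\prod'_{q}(G_q,H_q)$ is the subgroup of $\prod_q G_q$ of families $(g_q)$ with $g_q\in H_q$ for all but finitely many $q$, topologized by the neighbourhood basis of the identity consisting of sets $\prod_q U_q$ with $U_q$ an identity neighbourhood in $G_q$ and $U_q=H_q$ for all but finitely many $q$. A topological module has no small submodules if some neighbourhood of $0$ contains no nonzero submodule. *)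

(* Defs.v *)
From HB Require Import structures.
From mathcomp Require Import all_boot all_order all_algebra.
From mathcomp Require Import boolp classical_sets cardinality topology tvs.
Set Implicit Arguments. Unset Strict Implicit. Unset Printing Implicit Defensive.
Import Order.TTheory GRing.Theory Num.Theory.
Local Open Scope classical_set_scope.
Local Open Scope ring_scope.

Definition idx (Sigma : pred nat) := {q : nat | Sigma q}.

(** S = multiplicative monoid generated by Sigma: positive integers all of
    whose prime divisors lie in Sigma.  Z[S^-1] = rationals whose reduced
    denominator lies in S. *)
Definition in_S (Sigma : pred nat) (s : nat) : Prop :=
  (0 < s)%N /\ forall p, prime p -> (p %| s)%N -> Sigma p.
Definition in_ZSinv (Sigma : pred nat) (r : rat) : Prop :=
  in_S Sigma `|denq r|%N.

Definition qabs (q : nat) (r : rat) : rat :=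
  if r == 0 then 0
  else (q%:R : rat) ^ ((logn q `|denq r|)%:Z - (logn q `|numq r|)%:Z).

(** (K, absK) is a model of the field Q_q of q-adic numbers, i.e. a completion
    of Q for the q-adic absolute value: a field with an absolute value,
    complete, in which Q is dense and on which the absolute value restricts to
    |.|_q.  Such a valued field is unique up to unique isometric isomorphism. *)
Definition is_Qq_model (q : nat) (K : fieldType) (absK : K -> rat) : Prop :=
  [/\ ((forall x, 0 <= absK x) /\ (forall x, absK x = 0 <-> x = 0)),
      (forall x y, absK (x * y) = absK x * absK y),
      (forall x y, absK (x + y) <= absK x + absK y),
      (forall r : rat, absK (ratr r) = qabs q r)
    & (forall x (eps : rat), 0 < eps -> exists r : rat, absK (x - ratr r) < eps)] /\
    (forall u : nat -> K,
         (forall eps : rat, 0 < eps -> exists N, forall m n, (N <= m)%N -> (N <= n)%N ->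
              absK (u m - u n) < eps) ->
         exists l, forall eps : rat, 0 < eps -> exists N, forall n, (N <= n)%N ->
              absK (u n - l) < eps).

Definition is_top_vspace (K : fieldType) (absK : K -> rat)
    (V : topologicalZmodType) (smul : K -> V -> V) : Prop :=
  [/\ (forall a x y, smul a (x + y) = smul a x + smul a y),
      (forall a b x, smul (a + b) x = smul a x + smul b x),
      (forall a b x, smul (a * b) x = smul a (smul b x)),
      (forall x, smul 1 x = x)
    & (forall a (x : V) (W : set V), nbhs (smul a x) W ->
        exists2 eps : rat, 0 < eps &
        exists2 U : set V, nbhs x U &
          forall b y, absK (b - a) < eps -> U y -> W (smul b y))].

Definition compact_open_subgroup (V : topologicalZmodType) (Z : set V) : Prop :=
  [/\ Z 0, (forall x y, Z x -> Z y -> Z (x - y)), open Z & compact Z].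

Section RestrictedProduct.
Variables (I : Type) (G : I -> zmodType).

Definition padd (x y : forall i, G i) : forall i, G i := fun i => x i + y i.
Definition popp (x : forall i, G i) : forall i, G i := fun i => - x i.
Definition pzero : forall i, G i := fun i => 0.

(** H i : the compact open subgroups *)
Definition rp (H : forall i, set (G i)) : set (forall i, G i) :=
  [set x | finite_set [set i | ~ H i (x i)]].

(** N0 i U : "U is a neighbourhood of 0 in G i".  A basic neighbourhood of the
    identity is prod_i U i with U i a neighbourhood of 0, U i = H i for all but
    finitely many i. *)
Definition basic0 (N0 : forall i, set (set (G i))) (H : forall i, set (G i))
    (U : forall i, set (G i)) : Prop :=
  (forall i, N0 i (U i)) /\ finite_set [set i | U i <> H i].

Definition rp_open N0 H (A : set (forall i, G i)) : Prop :=
  A `<=` rp H /\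
  forall x, A x -> exists2 U, basic0 N0 H U &
     forall y, rp H y -> (forall i, U i (y i - x i)) -> A y.

Definition rp_nbhs0 N0 H (W : set (forall i, G i)) : Prop :=
  exists2 U, basic0 N0 H U & forall y, rp H y -> (forall i, U i (y i)) -> W y.

Definition rp_submodule (Sigma : pred nat) (act : forall i, rat -> G i -> G i)
   H (M : set (forall i, G i)) : Prop :=
  [/\ M `<=` rp H, M pzero,
      (forall x y, M x -> M y -> M (padd x y)),
      (forall x, M x -> M (popp x))
    & (forall r x, in_ZSinv Sigma r -> M x -> M (fun i => act i r (x i)))].

Definition no_small_submodules Sigma act N0 H : Prop :=
  exists2 W, rp_nbhs0 N0 H W &
    forall M, rp_submodule Sigma act H M -> M `<=` W -> M `<=` [set pzero].

End RestrictedProduct.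

Definition rp_iso (Sigma : pred nat) (I : Type) (G G' : I -> zmodType)
    (act : forall i, rat -> G i -> G i) (act' : forall i, rat -> G' i -> G' i)
    (N0 : forall i, set (set (G i))) (H : forall i, set (G i))
    (N0' : forall i, set (set (G' i))) (H' : forall i, set (G' i))
    (f : (forall i, G i) -> (forall i, G' i)) : Prop :=
  [/\ (forall x, rp H x -> rp H' (f x)),
      (forall x y, rp H x -> rp H y -> f x = f y -> x = y)
    & (forall y, rp H' y -> exists2 x, rp H x & f x = y)] /\
  [/\ (forall x y, rp H x -> rp H y -> f (padd x y) = padd (f x) (f y)),
      (forall r x, in_ZSinv Sigma r -> rp H x ->
          f (fun i => act i r (x i)) = (fun i => act' i r (f x i))),
      (forall A, rp_open N0' H' A -> rp_open N0 H [set x | rp H x /\ A (f x)])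
    & (forall A, rp_open N0 H A -> rp_open N0' H' (f @` A))].

Definition nbhs0_Kn (K : fieldType) (absK : K -> rat) (n : nat) :
    set (set 'rV[K]_n) :=
  fun U => exists2 eps : rat, 0 < eps &
     forall v : 'rV[K]_n, (forall j, absK (v ord0 j) < eps) -> U v.
Definition ball1_Kn (K : fieldType) (absK : K -> rat) (n : nat) : set 'rV[K]_n :=
  [set v | forall j, absK (v ord0 j) <= 1].
Arguments nbhs0_Kn {K} absK n.
Arguments ball1_Kn {K} absK n.

(* Main.v *)
Require Import Defs.
From HB Require Import structures.
From mathcomp Require Import all_boot all_order all_algebra.
From mathcomp Require Import boolp classical_sets cardinality topology tvs.
From mathcomp Require Import ring lra.
Import Order.TTheory GRing.Theory Num.Theory.
Local Open Scope classical_set_scope.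
Local Open Scope ring_scope.

Section TopFacts.
Variable V : topologicalZmodType.

Lemma nbhs_sub (x y : V) (A : set V) : nbhs (y - x) A -> nbhs y [set v | A (v - x)].
Proof.
move=> hA.
have hc : (fun v : V => v - x) @ y --> y - x.
  apply: (@continuous_comp _ _ _ (fun v : V => (v, x)) (fun p : V * V => p.1 - p.2) y).
    by apply: cvg_pair; [exact: cvg_id | exact: cvg_cst].
  exact: sub_continuous.
exact: hc.
Qed.

Lemma nbhs_add (x y : V) (A : set V) : nbhs (y + x) A -> nbhs y [set v | A (v + x)].
Proof.
move=> hA.
have hc : (fun v : V => v + x) @ y --> y + x.
  apply: (@continuous_comp _ _ _ (fun v : V => (v, x)) (fun p : V * V => p.1 + p.2) y).
    by apply: cvg_pair; [exact: cvg_id | exact: cvg_cst].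
  exact: add_continuous.
exact: hc.
Qed.

Lemma filter_prod_intro (I : Type) (F : set_system I) (x : V) (U : set V) (B : set I)
  (P : I -> V -> Prop) :
  nbhs x U -> F B -> (forall v i, U v -> B i -> P i v) ->
  \forall x' \near x & i \near F, P i x'.
Proof.
by move=> hU hB h; exists (U, B) => //= -[v i] [/= Uv Bi]; apply: h.
Qed.
End TopFacts.
Section KFacts.
Variables (q : nat) (K : fieldType) (absK : K -> rat).
Hypotheses (hq : prime q) (HK : is_Qq_model q absK).

Let HK1 := HK.1.
Lemma aK_ge0 x : 0 <= absK x. Proof. by case: HK1 => [[]]. Qed.
Lemma aK_eq0 x : absK x = 0 <-> x = 0. Proof. by case: HK1 => [[]]. Qed.
Lemma aK0 : absK 0 = 0. Proof. exact/aK_eq0. Qed.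
Lemma aKM x y : absK (x * y) = absK x * absK y. Proof. by case: HK1. Qed.
Lemma aKD x y : absK (x + y) <= absK x + absK y. Proof. by case: HK1. Qed.
Lemma aK_ratr r : absK (ratr r) = qabs q r. Proof. by case: HK1. Qed.
Lemma aK_dense x eps : 0 < eps -> exists r : rat, absK (x - ratr r) < eps.
Proof. by case: HK1 => _ _ _ _; apply. Qed.
Lemma aK_complete (u : nat -> K) :
  (forall eps : rat, 0 < eps -> exists N, forall m n, (N <= m)%N -> (N <= n)%N ->
       absK (u m - u n) < eps) ->
  exists l, forall eps : rat, 0 < eps -> exists N, forall n, (N <= n)%N ->
       absK (u n - l) < eps.
Proof. exact: HK.2. Qed.

Lemma aK_neq0 x : x != 0 -> 0 < absK x.
Proof.
move=> x0; rewrite lt_def aK_ge0 andbT; apply/eqP => /aK_eq0/eqP.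
by rewrite (negbTE x0).
Qed.

Lemma aK1 : absK 1 = 1.
Proof.
have h : absK 1 * absK 1 = absK 1 * 1 by rewrite -aKM mulr1 mulr1.
apply: (mulfI _ h); apply/eqP => /aK_eq0/eqP; by rewrite oner_eq0.
Qed.

Lemma aKN1 : absK (-1) = 1.
Proof.
have h : absK (-1) ^+ 2 == 1 by rewrite expr2 -aKM mulrNN mulr1 aK1.
by move: h; rewrite sqrp_eq1 ?aK_ge0 // => /eqP.
Qed.

Lemma aKN x : absK (- x) = absK x.
Proof. by rewrite -mulN1r aKM aKN1 mul1r. Qed.

Lemma aKB x y : absK (x - y) = absK (y - x).
Proof. by rewrite -aKN opprB. Qed.

Lemma aKV x : absK (x^-1) = (absK x)^-1.
Proof.
have [->|x0] := eqVneq x 0; first by rewrite invr0 aK0 invr0.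
have h : absK x * absK x^-1 = 1 by rewrite -aKM mulfV // aK1.
by rewrite -[LHS]mul1r -(mulVf (lt0r_neq0 (aK_neq0 _ x0))) -mulrA h mulr1.
Qed.

Lemma aKX x n : absK (x ^+ n) = absK x ^+ n.
Proof. elim: n => [|n IH]; by rewrite ?expr0 ?aK1 // !exprS aKM IH. Qed.

Lemma q_gt1 : (1 < q)%N. Proof. exact: prime_gt1. Qed.
Lemma qR_gt1 : 1 < (q%:R : rat). Proof. by rewrite ltr1n q_gt1. Qed.
Lemma qR_gt0 : 0 < (q%:R : rat). Proof. by rewrite (lt_trans _ qR_gt1). Qed.

Lemma aK_int (m : int) : m != 0 -> absK (m%:~R) = ((q%:R : rat) ^+ (logn q `|m|))^-1.
Proof.
move=> m0; rewrite -ratr_int aK_ratr /qabs intr_eq0 (negbTE m0) denq_int numq_int.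
by rewrite logn1 /= sub0r -exprnN exprnP invr_expz.
Qed.
Lemma aK_int_le1 (m : int) : absK m%:~R <= 1.
Proof.
have [->|m0] := eqVneq m 0; first by rewrite mulr0z aK0.
rewrite aK_int // invf_le1 ?exprn_gt0 ?qR_gt0 //.
by rewrite exprn_ege1 // ltW // qR_gt1.
Qed.

Lemma aK_int_unit (m : int) : ~~ (q %| `|m|)%N -> absK m%:~R = 1.
Proof.
move=> nd; have m0 : m != 0 by apply: contra nd => /eqP ->.
by rewrite aK_int // logn_coprime ?expr0 ?invr1 // prime_coprime.
Qed.

Lemma aK_q : absK (q%:R) = (q%:R)^-1.
Proof.
have -> : (q%:R : K) = (q%:Z)%:~R by [].
by rewrite aK_int ?logn_prime // ?eqxx ?expr1 // eqz_nat -lt0n prime_gt0.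
Qed.

Lemma aK_qX n : absK (q%:R ^+ n) = ((q%:R)^+n)^-1.
Proof. by rewrite aKX aK_q exprVn. Qed.

Lemma aK_int_dvd (m : int) : m != 0 -> (q %| `|m|)%N -> absK m%:~R <= (q%:R)^-1.
Proof.
move=> m0 d; rewrite aK_int //.
have k1 : (0 < logn q `|m|)%N.
  by rewrite logn_gt0 mem_primes hq absz_gt0 m0.
rewrite lef_pV2 ?posrE ?exprn_gt0 ?qR_gt0 //.
by rewrite -[X in X <= _]expr1 ler_eXn2l // qR_gt1.
Qed.

Lemma intrK_neq0 (m : int) : m != 0 -> (m%:~R : K) != 0.
Proof.
move=> m0; apply/eqP => h; have := aK_int _ m0; rewrite h aK0 => /esym/eqP.
by rewrite invr_eq0 expf_eq0 pnatr_eq0 (gtn_eqF (prime_gt0 hq)) andbF.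
Qed.

Lemma q_pow_big (x : rat) : exists N, x < (q%:R) ^+ N.
Proof.
have [x0|x0] := lerP x 0.
  by exists 0%N; rewrite expr0 (le_lt_trans x0) // ltr01.
exists (Num.Def.archi_bound x); apply: (lt_le_trans (archi_boundP (ltW x0))).
rewrite -natrX ler_nat; set B := Num.Def.archi_bound x.
apply: (leq_trans (ltnW (ltn_expl B (isT : (1 < 2)%N)))).
by rewrite leq_exp2r // prime_gt1.
Qed.

Lemma q_powV_small (eps : rat) : 0 < eps -> exists N, ((q%:R)^+N)^-1 < eps.
Proof.
move=> e0; have [N hN] := q_pow_big (eps^-1); exists N.
rewrite -[eps]invrK ltf_pV2 ?posrE ?exprn_gt0 ?qR_gt0 ?invr_gt0 //.
Qed.

Lemma aK_approx_int_N t N : absK t <= 1 ->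
  exists m : int, absK (t - m%:~R) < ((q%:R)^+N)^-1 + ((q%:R)^+N)^-1.
Proof.
move=> t1; set e := ((q%:R : rat)^+N)^-1.
have e0 : 0 < e by rewrite invr_gt0 exprn_gt0 ?qR_gt0.
have e1 : e <= 1 by rewrite invf_le1 ?exprn_gt0 ?qR_gt0 // exprn_ege1 // ltW // qR_gt1.
have [r hr] := aK_dense t _ e0.
have rq : absK (ratr r) < q%:R.
  have -> : ratr r = t - (t - ratr r) by rewrite opprB addrC subrK.
  apply: (le_lt_trans (aKD _ _)); rewrite aKN.
  apply: (lt_le_trans (ler_ltD t1 hr)) => //.
  apply: (le_trans (lerD (lexx 1) e1)); by rewrite -mulr2n ler_nat prime_gt1.
have hden0 : denq r != 0 by rewrite denq_neq0.
have hnum : (numq r)%:~R = ratr r * (denq r)%:~R :> K.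
  by rewrite /ratr divfK // intrK_neq0.
have ndq : ~~ (q %| `|denq r|)%N.
  apply/negP => dq.
  have nq : ~~ (q %| `|numq r|)%N.
    apply/negP => nq; have := coprime_num_den r.
    rewrite /coprime => /eqP g; have := dvdn_gcd q `|numq r| `|denq r|.
    by rewrite g nq dq dvdn1 => /eqP q1; move: q_gt1; rewrite q1.
  have := congr1 absK hnum; rewrite aK_int_unit // aKM => h.
  have := aK_int_dvd _ hden0 dq => hd.
  have : 1 <= absK (ratr r) * (q%:R)^-1.
    by rewrite [X in X <= _]h ler_wpM2l ?aK_ge0.
  rewrite ler_pdivlMr ?qR_gt0 // mul1r => /(lt_le_trans rq); by rewrite ltxx.
have cop : coprimez (denq r) (q%:Z ^+ N).
  by apply: coprimezXr; rewrite coprimezE coprime_sym prime_coprime.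
have [u [v huv]] := Bezoutz (denq r) (q%:Z ^+ N).
move: cop; rewrite /coprimez => /eqP g1; rewrite g1 in huv.
exists (numq r * u).
have key : (ratr r - (numq r * u)%:~R) * (denq r)%:~R = (numq r * v)%:~R * (q%:R ^+ N) :> K.
  rewrite mulrBl -hnum.
  have -> : (q%:R ^+ N : K) = (q%:Z ^+ N)%:~R by rewrite rmorphXn.
  rewrite -!intrM -intrB; congr (_%:~R).
  have hv : v * q%:Z ^+ N = 1 - u * denq r by rewrite -huv [u * _ + _]addrC addrK.
  by rewrite -[RHS]mulrA hv mulrBr mulr1 mulrA.
have hrm : absK (ratr r - (numq r * u)%:~R) <= e.
  have := congr1 absK key; rewrite !aKM [absK (denq r)%:~R]aK_int_unit // mulr1 aK_qX => ->.
  by rewrite -[X in _ <= X]mul1r ler_wpM2r ?aK_int_le1 // invr_ge0 exprn_ge0 // ltW // qR_gt0.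
have -> : t - (numq r * u)%:~R = (t - ratr r) + (ratr r - (numq r * u)%:~R).
  by rewrite addrA subrK.
apply: (le_lt_trans (aKD _ _)); by rewrite ltr_leD.
Qed.

Lemma aK_approx_int t eps : absK t <= 1 -> 0 < eps ->
  exists m : int, absK (t - m%:~R) < eps.
Proof.
move=> t1 e0; have [N hN] := q_powV_small _ (divr_gt0 e0 (ltr0n _ 2)).
have [m hm] := aK_approx_int_N _ N t1; exists m; apply: (lt_trans hm).
by move: hN; rewrite ltr_pdivlMr // mulr_natr mulr2n.
Qed.
Lemma le1_eps (a : rat) : (forall eps, 0 < eps -> a <= 1 + eps) -> a <= 1.
Proof.
move=> h; rewrite leNgt; apply/negP => a1.
have := h ((a - 1) / 2%:R); rewrite divr_gt0 ?subr_gt0 ?ltr0n // => /(_ isT).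
lra.
Qed.

Lemma aK_1t t : absK t <= 1 -> absK (1 + t) <= 1.
Proof.
move=> t1; apply: le1_eps => eps e0.
have [m hm] := aK_approx_int _ _ t1 e0.
have -> : 1 + t = (1 + m)%:~R + (t - m%:~R) by rewrite intrD; ring.
by apply: (le_trans (aKD _ _)); rewrite lerD ?aK_int_le1 // ltW.
Qed.

Lemma aK_ultra_le x y : absK y <= absK x -> absK (x + y) <= absK x.
Proof.
move=> yx; have [x0|x0] := eqVneq x 0; first by move: yx; rewrite x0 add0r.
have -> : x + y = x * (1 + y / x) by rewrite mulrDr mulr1 mulrCA mulfV // mulr1.
rewrite aKM -[X in _ <= X]mulr1 ler_wpM2l ?aK_ge0 // aK_1t //.
by rewrite aKM aKV ler_pdivrMr ?mul1r // aK_neq0.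
Qed.

Lemma aK_add_le x y e : absK x <= e -> absK y <= e -> absK (x + y) <= e.
Proof.
move=> hx hy; have [yx|xy] := leP (absK y) (absK x).
  exact: le_trans (aK_ultra_le _ _ yx) hx.
by rewrite addrC; apply: le_trans (aK_ultra_le _ _ (ltW xy)) hy.
Qed.

Lemma aK_sum_le (I : finType) (F : I -> K) e : 0 <= e ->
  (forall j, absK (F j) <= e) -> absK (\sum_j F j) <= e.
Proof.
move=> e0 h; elim/big_rec: _ => [|j s _ hs]; first by rewrite aK0.
exact: aK_add_le.
Qed.

Lemma aK_opp_le x e : absK x <= e -> absK (- x) <= e.
Proof. by rewrite aKN. Qed.
Variables (V : topologicalZmodType) (smul : K -> V -> V) (Z : set V).
Hypotheses (hV : hausdorff_space V) (Hs : is_top_vspace absK smul)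
  (HZ : compact_open_subgroup Z).

Lemma smulDr a x y : smul a (x + y) = smul a x + smul a y.
Proof. by case: Hs. Qed.
Lemma smulDl a b x : smul (a + b) x = smul a x + smul b x.
Proof. by case: Hs. Qed.
Lemma smulM a b x : smul (a * b) x = smul a (smul b x).
Proof. by case: Hs. Qed.
Lemma smul1 x : smul 1 x = x.
Proof. by case: Hs. Qed.
Lemma smul_cont a x W : nbhs (smul a x) W ->
  exists2 eps : rat, 0 < eps & exists2 U, nbhs x U &
     forall b y, absK (b - a) < eps -> U y -> W (smul b y).
Proof. by case: Hs => _ _ _ _; apply. Qed.

Lemma smul0l x : smul 0 x = 0.
Proof.
apply: (@addrI _ (smul 0 x)); by rewrite -smulDl addr0 addr0.
Qed.
Lemma smul0r a : smul a 0 = 0.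
Proof.
apply: (@addrI _ (smul a 0)); by rewrite -smulDr addr0 addr0.
Qed.
Lemma smulNl a x : smul (- a) x = - smul a x.
Proof. by apply/eqP; rewrite -addr_eq0 -smulDl addNr smul0l. Qed.
Lemma smulNr a x : smul a (- x) = - smul a x.
Proof. by apply/eqP; rewrite -addr_eq0 -smulDr addNr smul0r. Qed.
Lemma smulBr a x y : smul a (x - y) = smul a x - smul a y.
Proof. by rewrite smulDr smulNr. Qed.
Lemma smulBl a b x : smul (a - b) x = smul a x - smul b x.
Proof. by rewrite smulDl smulNl. Qed.
Lemma smul_sumr (I : finType) a (F : I -> V) :
  smul a (\sum_j F j) = \sum_j smul a (F j).
Proof. exact: (big_morph _ (smulDr a) (smul0r a)). Qed.
Lemma smul_sumr_pred (I : finType) (P : pred I) a (F : I -> V) :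
  smul a (\sum_(j | P j) F j) = \sum_(j | P j) smul a (F j).
Proof. exact: (big_morph _ (smulDr a) (smul0r a)). Qed.
Lemma smul_sumr_ord n a (F : 'I_n -> V) :
  smul a (\sum_(j < n) F j) = \sum_(j < n) smul a (F j).
Proof. exact: (big_morph _ (smulDr a) (smul0r a)). Qed.
Lemma smulKV c x : c != 0 -> smul c (smul c^-1 x) = x.
Proof. by move=> c0; rewrite -smulM mulfV // smul1. Qed.
Lemma smulVK c x : c != 0 -> smul c^-1 (smul c x) = x.
Proof. by move=> c0; rewrite -smulM mulVf // smul1. Qed.
Lemma smulC a b x : smul a (smul b x) = smul b (smul a x).
Proof. by rewrite -!smulM mulrC. Qed.

Lemma smul_nat n x : smul (n%:R) x = x *+ n.
Proof.
elim: n => [|n IH]; first by rewrite smul0l.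
by rewrite -natr1 smulDl IH smul1 mulrSr.
Qed.
Lemma smul_int (m : int) x : smul (m%:~R) x = x *~ m.
Proof.
case: m => n; first by rewrite -!pmulrn smul_nat.
by rewrite NegzE !mulrNz smulNl -!pmulrn smul_nat.
Qed.

Lemma Z0 : Z 0. Proof. by case: HZ. Qed.
Lemma ZB x y : Z x -> Z y -> Z (x - y). Proof. by case: HZ => _ h _ _; apply: h. Qed.
Lemma ZN x : Z x -> Z (- x). Proof. by move=> zx; rewrite -sub0r; apply: ZB => //; exact: Z0. Qed.
Lemma ZD x y : Z x -> Z y -> Z (x + y).
Proof. by move=> zx zy; rewrite -[y]opprK; apply: ZB => //; exact: ZN. Qed.
Lemma Zopen : open Z. Proof. by case: HZ. Qed.
Lemma Zcompact : compact Z. Proof. by case: HZ. Qed.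
Lemma Znbhs : nbhs (0 : V) Z.
Proof. by apply: open_nbhs_nbhs; split; [exact: Zopen | exact: Z0]. Qed.
Lemma ZmulN x n : Z x -> Z (x *+ n).
Proof. by move=> zx; elim: n => [|n IH]; [rewrite mulr0n; exact: Z0 | rewrite mulrS; exact: ZD]. Qed.
Lemma Zmulz x (m : int) : Z x -> Z (x *~ m).
Proof.
move=> zx; case: m => n; first by rewrite -pmulrn; exact: ZmulN.
by rewrite NegzE mulrNz; apply: ZN; rewrite -pmulrn; exact: ZmulN.
Qed.
Lemma Z_sum (I : finType) (F : I -> V) : (forall j, Z (F j)) -> Z (\sum_j F j).
Proof. by move=> h; elim/big_rec: _ => [|j s _ hs]; [exact: Z0 | exact: ZD]. Qed.

Lemma Z_Ostable a x : absK a <= 1 -> Z x -> Z (smul a x).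
Proof.
move=> a1 zx.
have hW : nbhs (smul a x) [set v | Z (v - smul a x)].
  by apply: nbhs_sub; rewrite subrr; exact: Znbhs.
have [eps e0 [U hU hWU]] := smul_cont _ _ _ hW.
have [m hm] := aK_approx_int _ _ a1 e0.
have := hWU (m%:~R) x; rewrite aKB => /(_ hm (nbhs_singleton hU)) /=.
rewrite smul_int => h.
have -> : smul a x = x *~ m - (x *~ m - smul a x) by rewrite opprB addrC subrK.
by apply: ZB => //; exact: Zmulz.
Qed.

Definition qk k : K := (q%:R)^+k.
Lemma aK_qk k : absK (qk k) = ((q%:R)^+k)^-1. Proof. exact: aK_qX. Qed.
Lemma qpowV_gt0 k : 0 < ((q%:R : rat)^+k)^-1.
Proof. by rewrite invr_gt0 exprn_gt0 // qR_gt0. Qed.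
Lemma qpowV_le1 k : ((q%:R : rat)^+k)^-1 <= 1.
Proof. by rewrite invf_le1 ?exprn_gt0 ?qR_gt0 // exprn_ege1 // ltW // qR_gt1. Qed.
Lemma qpowV_mono k l : (l <= k)%N -> ((q%:R : rat)^+k)^-1 <= ((q%:R : rat)^+l)^-1.
Proof.
move=> lk; rewrite lef_pV2 ?posrE ?exprn_gt0 ?qR_gt0 //.
by rewrite ler_eXn2l // qR_gt1.
Qed.
Lemma aK_qk_le1 k : absK (qk k) <= 1. Proof. by rewrite aK_qk qpowV_le1. Qed.
Lemma qk_neq0 k : qk k != 0.
Proof. by apply/eqP => /aK_eq0; rewrite aK_qk => /eqP; rewrite gt_eqF // qpowV_gt0. Qed.
Lemma qkD k l : qk (k + l) = qk k * qk l. Proof. by rewrite /qk exprD. Qed.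

Definition Zk k := [set v | Z (smul (qk k)^-1 v)].

Lemma nbhs0_pre (c : K) (A : set V) : nbhs (0 : V) A -> nbhs (0 : V) [set v | A (smul c v)].
Proof.
move=> hA; have := smul_cont c 0 A; rewrite smul0r => /(_ hA) [eps e0 [U hU hUW]].
by apply: filterS hU => y Uy; apply: hUW => //; rewrite subrr aK0.
Qed.

Lemma Zk_nbhs k : nbhs (0 : V) (Zk k). Proof. exact: nbhs0_pre Znbhs. Qed.
Lemma Zk_smul k z : Z z -> Zk k (smul (qk k) z).
Proof. by rewrite /Zk /= smulVK // qk_neq0. Qed.
Lemma Zk_elim k v : Zk k v -> exists2 z, Z z & v = smul (qk k) z.
Proof. by move=> h; exists (smul (qk k)^-1 v) => //; rewrite smulKV // qk_neq0. Qed.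
Lemma Zk_Z k v : Zk k v -> Z v.
Proof. by move=> /Zk_elim [z zz ->]; apply: Z_Ostable => //; exact: aK_qk_le1. Qed.
Lemma Zk0 k : Zk k 0. Proof. by rewrite /Zk /= smul0r; exact: Z0. Qed.
Lemma ZkB k x y : Zk k x -> Zk k y -> Zk k (x - y).
Proof. by rewrite /Zk /= smulBr; exact: ZB. Qed.
Lemma ZkD k x y : Zk k x -> Zk k y -> Zk k (x + y).
Proof. by rewrite /Zk /= smulDr; exact: ZD. Qed.
Lemma ZkN k x : Zk k x -> Zk k (- x).
Proof. by rewrite /Zk /= smulNr; exact: ZN. Qed.
Lemma Zk_sum k (I : finType) (F : I -> V) : (forall j, Zk k (F j)) -> Zk k (\sum_j F j).
Proof. by move=> h; elim/big_rec: _ => [|j s _ hs]; [exact: Zk0 | exact: ZkD]. Qed.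
Lemma Zk_Ostable k a v : absK a <= 1 -> Zk k v -> Zk k (smul a v).
Proof. by rewrite /Zk /= smulC => a1 h; apply: Z_Ostable. Qed.
Lemma Zk_small k a z : absK a <= ((q%:R)^+k)^-1 -> Z z -> Zk k (smul a z).
Proof.
move=> ha zz; rewrite /Zk /= -smulM; apply: Z_Ostable => //.
rewrite aKM aKV aK_qk invrK -(ler_pM2l (qpowV_gt0 k)) mulrA mulVf ?mul1r ?mulr1 //.
by rewrite gt_eqF // exprn_gt0 // qR_gt0.
Qed.
Lemma Zk_mono k l v : (l <= k)%N -> Zk k v -> Zk l v.
Proof.
move=> lk /Zk_elim [z zz ->]; rewrite -(subnKC lk) qkD smulM.
by apply: Zk_smul; apply: Z_Ostable => //; exact: aK_qk_le1.
Qed.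

Lemma shrink (W : set V) : nbhs (0 : V) W -> exists k, forall v, Zk k v -> W v.
Proof.
move=> hW.
have cov := (compact_near_coveringP Z).1 Zcompact.
have := cov nat \oo (fun k v => W (smul (qk k) v)) _.
case.
- move=> x zx; have := smul_cont 0 x W; rewrite smul0l => /(_ hW) [eps e0 [U hU hUW]].
  have [N hN] := q_powV_small _ e0.
  apply: (@filter_prod_intro V nat \oo x U [set n | (N <= n)%N] (fun i v => W (smul (qk i) v)) hU (nbhs_infty_ge N)) => v i Uv Ni; apply: hUW => //.
  rewrite subr0 aK_qk; apply: le_lt_trans hN; exact: qpowV_mono.
- move=> N _ hN; exists N => v /Zk_elim [z zz ->]; exact: (hN N (leqnn N) z zz).
Qed.

Lemma Zk_inter v : (forall k, Zk k v) -> v = 0.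
Proof.
move=> h; apply/eqP; apply/negP => /negP v0.
have v0' : (0 : V) != v by rewrite eq_sym.
have [A [oA A0 Av]] := hausdorff_accessible hV v0'.
have nA : nbhs (0 : V) A by apply: open_nbhs_nbhs; split => //; rewrite -in_setE.
have [k hk] := shrink _ nA.
by move: Av; rewrite in_setE /= => /(_ (hk _ (h k))).
Qed.

Lemma absorb v : exists k, Z (smul (qk k) v).
Proof.
have := smul_cont 0 v Z; rewrite smul0l => /(_ Znbhs) [eps e0 [U hU hUW]].
have [N hN] := q_powV_small _ e0; exists N; apply: hUW; last exact: nbhs_singleton.
by rewrite subr0 aK_qk.
Qed.

Definition SF : set_system (seq V) :=
  fun A => exists s0 : seq V, forall s, {subset s0 <= s} -> A s.

Lemma SF_filter : Filter SF.
Proof.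
apply: Build_Filter.
- by exists [::].
- move=> A B [s0 h0] [s1 h1]; exists (s0 ++ s1) => s hs; split.
  + by apply: h0 => x xs; apply: hs; rewrite mem_cat xs.
  + by apply: h1 => x xs; apply: hs; rewrite mem_cat xs orbT.
- by move=> A B AB [s0 h0]; exists s0 => s hs; apply: AB; apply: h0.
Qed.

Lemma fin_cover : exists s : seq V, (forall x, x \in s -> Z x) /\
  (forall z, Z z -> exists2 x, x \in s & Zk 1 (z - x)).
Proof.
have cov := (compact_near_coveringP Z).1 Zcompact.
have := cov (seq V) SF (fun s v => exists2 x, x \in s & Z x /\ Zk 1 (v - x)) SF_filter.
case.
- move=> x zx.
  have hU : nbhs x [set v | Zk 1 (v - x)] by apply: nbhs_sub; rewrite subrr; exact: Zk_nbhs.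
  have hB : SF [set s : seq V | x \in s] by exists [:: x] => s; apply; rewrite mem_seq1.
  apply: (@filter_prod_intro V (seq V) SF x _ _
     (fun s v => exists2 x, x \in s & Z x /\ Zk 1 (v - x)) hU hB).
  by move=> v s Uv Bs; exists x.
- move=> s0 h; have := h s0 (fun x xs => xs) => hs.
  exists [seq x <- s0 | `[< Z x >]]; split.
  + by move=> x; rewrite mem_filter => /andP [/asboolP].
  + move=> z zz; have [x xs [zx hx]] := hs z zz; exists x => //.
    by rewrite mem_filter xs andbT; apply/asboolP.
Qed.

Definition gen n (xs : 'I_n -> V) :=
  (forall j, Z (xs j)) /\ forall z, Z z -> exists2 c : 'I_n -> K,
     (forall j, absK (c j) <= 1) & Zk 1 (z - \sum_j smul (c j) (xs j)).

Lemma gen_exists : exists n xs, gen n xs.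
Proof.
have [s [sZ scov]] := fin_cover.
exists (size s), (fun j => nth 0 s j); split.
  by move=> j; apply: sZ; rewrite mem_nth.
move=> z zz; have [x xs hx] := scov z zz.
have ji : (index x s < size s)%N by rewrite index_mem.
pose j := Ordinal ji.
exists (fun k => if k == j then 1 else 0).
  by move=> k; case: ifP; rewrite ?aK1 ?aK0 ?ler01.
rewrite (bigD1 j) //= eqxx smul1 big1 ?addr0 ?nth_index //.
by move=> k /negbTE ->; rewrite smul0l.
Qed.

Lemma gen_min : exists n xs, gen n xs /\ forall m ys, gen m ys -> (n <= m)%N.
Proof.
have ex : exists n, `[< exists xs, gen n xs >] by have [n [xs h]] := gen_exists; exists n; apply/asboolP; exists xs.
case: (ex_minnP ex) => n /asboolP [xs hxs] hmin.
exists n, xs; split => // m ys hys; apply: hmin; apply/asboolP; by exists ys.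
Qed.

Fixpoint ssum (c : nat -> K) k : K := if k is k'.+1 then ssum c k' + qk k' * c k' else 0.

Lemma ssum_cauchy c k m : (forall l, absK (c l) <= 1) -> (k <= m)%N ->
  absK (ssum c m - ssum c k) <= ((q%:R)^+k)^-1.
Proof.
move=> c1; elim: m => [|m IH] km.
  by move: km; rewrite leqn0 => /eqP ->; rewrite subrr aK0 ltW // qpowV_gt0.
move: km; rewrite leq_eqVlt => /orP [/eqP ->|km]; first by rewrite subrr aK0 ltW // qpowV_gt0.
rewrite /= addrAC; apply: aK_add_le; first exact: IH.
rewrite aKM aK_qk; apply: (le_trans (ler_wpM2l _ (c1 m))); first by rewrite ltW // qpowV_gt0.
by rewrite mulr1; apply: qpowV_mono; rewrite -ltnS.
Qed.

Lemma ssum_lim c : (forall l, absK (c l) <= 1) ->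
  exists alpha, forall k, absK (alpha - ssum c k) <= ((q%:R)^+k)^-1.
Proof.
move=> c1; have [l hl] : exists l, forall eps : rat, 0 < eps -> exists N, forall n, (N <= n)%N ->
       absK (ssum c n - l) < eps.
  apply: aK_complete => eps e0; have [N hN] := q_powV_small _ e0; exists N => m n Nm Nn.
  have [nm|mn] := leqP n m.
    by apply: le_lt_trans hN; apply: le_trans (ssum_cauchy _ _ _ c1 nm) _; apply: qpowV_mono.
  rewrite aKB; apply: le_lt_trans hN; apply: le_trans (ssum_cauchy _ _ _ c1 (ltnW mn)) _.
  exact: qpowV_mono.
exists l => k; have [N hN] := hl _ (qpowV_gt0 k).
have h1 := hN (maxn N k) (leq_maxl _ _).
have h2 := ssum_cauchy _ _ _ c1 (leq_maxr N k).
have -> : l - ssum c k = (ssum c (maxn N k) - ssum c k) - (ssum c (maxn N k) - l).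
  by ring.
by apply: aK_add_le => //; rewrite aKN ltW.
Qed.

Section Gen.
Variables (n : nat) (xs : 'I_n -> V).
Hypotheses (Hgen : gen n xs) (Hmin : forall m ys, gen m ys -> (n <= m)%N).

Lemma expand z : Z z -> exists2 a : 'I_n -> K, (forall j, absK (a j) <= 1) &
   z = \sum_j smul (a j) (xs j).
Proof.
move=> zz.
have hg : forall v, exists p : ('I_n -> K) * V, Z v ->
   [/\ forall j, absK (p.1 j) <= 1, Z p.2 & v = \sum_j smul (p.1 j) (xs j) + smul (qk 1) p.2].
  move=> v; case: (pselect (Z v)) => zv; last by exists ((fun _ => 0), 0).
  have [c hc hres] := Hgen.2 v zv; have [w zw hw] := Zk_elim _ _ hres.
  by exists (c, w) => _; split => //; rewrite -hw addrC subrK.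
have [g hg'] := choice hg.
pose w k := iter k (fun v => (g v).2) z.
have wZ : forall k, Z (w k).
  elim => [|k IH]; first exact: zz.
  by have [_ h _] := hg' _ IH.
pose c j l := (g (w l)).1 j.
have c1 : forall j l, absK (c j l) <= 1.
  by move=> j l; have [h _ _] := hg' _ (wZ l); apply: h.
have hexp : forall k, z = \sum_j smul (ssum (c j) k) (xs j) + smul (qk k) (w k).
  elim => [|k IH].
    by rewrite big1 ?add0r /= /qk ?expr0 ?smul1 // => j _; rewrite smul0l.
  rewrite {1}IH; have [_ _ e] := hg' _ (wZ k).
  rewrite {1}e smulDr smul_sumr /= -smulM -qkD addn1 addrA; congr (_ + _).
  rewrite -big_split /=; apply: eq_bigr => j _.
  by rewrite smulDl smulM.
have hal : forall j, exists al, forall k, absK (al - ssum (c j) k) <= ((q%:R)^+k)^-1.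
  by move=> j; apply: ssum_lim.
have [al hal'] := choice hal.
exists al.
  by move=> j; have := hal' j 0%N; rewrite /= subr0 expr0 invr1.
apply/eqP; rewrite -subr_eq0; apply/eqP; apply: Zk_inter => k.
rewrite {1}(hexp k) addrAC -sumrB.
apply: ZkD; last exact: Zk_smul.
apply: Zk_sum => j; rewrite -smulBl; apply: Zk_small; last exact: Hgen.1.
by rewrite aKB.
Qed.

Lemma indep b : \sum_j smul (b j) (xs j) = 0 -> forall j, b j = 0.
Proof.
move=> h j1; apply/eqP; apply/negP => /negP bj1.
case: (@arg_maxP _ _ _ j1 xpredT (fun j => absK (b j)) isT) => i _ hi.
have hb : forall j, absK (b j) <= absK (b i) by move=> j; exact: hi.
have bi : b i != 0.
  apply/eqP => bi0; move: (hb j1); rewrite bi0 aK0 => h1.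
  by move: (aK_neq0 _ bj1); rewrite ltNge h1.
pose be j := b j / b i.
have be1 : forall j, absK (be j) <= 1.
  by move=> j; rewrite aKM aKV ler_pdivrMr ?mul1r // aK_neq0.
have hbe : \sum_j smul (be j) (xs j) = 0.
  transitivity (smul (b i)^-1 (\sum_j smul (b j) (xs j))); last by rewrite h smul0r.
  rewrite smul_sumr; apply: eq_bigr => j _.
  by rewrite -smulM mulrC.
rewrite (bigD1_ord i) //= /be mulfV // smul1 in hbe.
pose ys k := xs (lift i k).
have hxi : xs i = - \sum_(k < n.-1) smul (be (lift i k)) (ys k).
  by apply/eqP; rewrite -addr_eq0 hbe.
have hgen : gen n.-1 ys.
  split; first by move=> k; exact: Hgen.1.
  move=> z zz; have [c hc hres] := Hgen.2 z zz.
  exists (fun k => c (lift i k) - c i * be (lift i k)).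
    move=> k; apply: aK_add_le => //; rewrite aKN aKM.
    by rewrite -[1]mulr1 ler_pM ?aK_ge0.
  suff -> : \sum_k smul (c (lift i k) - c i * be (lift i k)) (ys k) =
            \sum_j smul (c j) (xs j) by [].
  rewrite [RHS](bigD1_ord i) //= hxi smulNr smul_sumr_ord.
  rewrite addrC -sumrB; apply: eq_bigr => k _.
  by rewrite smulBl smulM.
have := Hmin _ _ hgen.
have n0 : (0 < n)%N := leq_ltn_trans (leq0n _) (ltn_ord i).
by rewrite -{1}(prednK n0) ltnn.
Qed.
End Gen.

Lemma local_structure : exists n (phi : 'rV[K]_n -> V) (g : V -> 'rV[K]_n),
 [/\ cancel g phi, cancel phi g, (forall a b, phi (a + b) = phi a + phi b),
     (forall c a, phi (c *: a) = smul c (phi a)) &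
     (forall a, ball1_Kn absK n a <-> Z (phi a))] /\
     ((forall U, nbhs0_Kn absK n U -> nbhs (0:V) [set v | U (g v)]) /\
     (forall U, nbhs (0:V) U -> nbhs0_Kn absK n [set a | U (phi a)])).
Proof.
have [n [xs [hgen hmin]]] := gen_min.
pose phi (a : 'rV[K]_n) := \sum_j smul (a ord0 j) (xs j).
have phiD : forall a b, phi (a + b) = phi a + phi b.
  by move=> a b; rewrite /phi -big_split; apply: eq_bigr => j _; rewrite mxE smulDl.
have phiZ : forall c a, phi (c *: a) = smul c (phi a).
  by move=> c a; rewrite /phi smul_sumr; apply: eq_bigr => j _; rewrite mxE smulM.
have phiB : forall a b, phi (a - b) = phi a - phi b.
  by move=> a b; rewrite /phi -sumrB; apply: eq_bigr => j _; rewrite !mxE smulBl.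
have phi_inj : injective phi.
  move=> a b e; apply/rowP => j; apply/eqP; rewrite -subr_eq0; apply/eqP.
  have h0 : \sum_j smul ((a - b) ord0 j) (xs j) = 0 by rewrite -/(phi _) phiB e subrr.
  by have := @indep n xs hgen hmin _ h0 j; rewrite !mxE.
have phi_surj : forall v, exists a, phi a = v.
  move=> v; have [k hk] := absorb v.
  have [al hal e] := @expand n xs hgen _ hk.
  exists (\row_j ((qk k)^-1 * al j)).
  rewrite /phi; transitivity (smul (qk k)^-1 (\sum_j smul (al j) (xs j))).
    by rewrite smul_sumr; apply: eq_bigr => j _; rewrite mxE smulM.
  by rewrite -e smulVK // qk_neq0.
have [g hg] := choice phi_surj.
have gK : cancel phi g by move=> a; apply: phi_inj; rewrite hg.
have hball : forall a, ball1_Kn absK n a <-> Z (phi a).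
  move=> a; split.
    by move=> ha; apply: Z_sum => j; apply: Z_Ostable => //; exact: hgen.1.
  move=> za; have [al hal e] := @expand n xs hgen _ za.
  have -> : a = \row_j al j.
    by apply: phi_inj; rewrite e /phi; apply: eq_bigr => j _; rewrite mxE.
  by move=> j; rewrite mxE.
exists n, phi, g; split; first by split.
split.
- move=> U [eps e0 hU]; have [k hk] := q_powV_small _ e0.
  apply: filterS (Zk_nbhs k) => v /Zk_elim [z zz ->] /=.
  have -> : g (smul (qk k) z) = qk k *: g z.
    by apply: phi_inj; rewrite hg phiZ hg.
  apply: hU => j; rewrite mxE aKM aK_qk; apply: (le_lt_trans _ hk).
  apply: ler_piMr; first exact: ltW (qpowV_gt0 k).
  by have := proj2 (hball (g z)); rewrite hg => /(_ zz) h; exact: h j.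
- move=> U hU; have [k hk] := shrink _ hU.
  exists (((q%:R : rat)^+k)^-1); first exact: qpowV_gt0.
  move=> a ha; apply: hk; apply: Zk_sum => j; apply: Zk_small; first exact: ltW.
  exact: hgen.1.
Qed.

End KFacts.

Lemma ratr_qinv (K : fieldType) (q : nat) : (0 < q)%N ->
  ratr ((q%:R : rat)^-1) = (q%:R : K)^-1.
Proof.
move=> q0; have qz : (q%:Z != 0) by rewrite eqz_nat -lt0n.
have h := @coprimeq_num 1 q%:Z (coprime1n _).
rewrite mulr1 gtr0_sg ?ltz_nat // mulr1z mul1r in h.
rewrite /ratr pmulrn denqVz // h.
by rewrite ger0_norm // mulr1z -pmulrn mul1r.
Qed.


Section Assembly.
Variables (Sigma : pred nat) (K : idx Sigma -> fieldType) (absK : forall i, K i -> rat)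
  (V : idx Sigma -> topologicalZmodType) (smul : forall i, K i -> V i -> V i)
  (Z : forall i, set (V i)) (n : idx Sigma -> nat)
  (phi : forall i, 'rV[K i]_(n i) -> V i) (g : forall i, V i -> 'rV[K i]_(n i)).
Hypotheses (gK : forall i, cancel (g i) (phi i)) (phiK : forall i, cancel (phi i) (g i))
  (phiD : forall i a b, phi i (a + b) = phi i a + phi i b)
  (phiZ : forall i c a, phi i (c *: a) = smul i c (phi i a))
  (hball : forall i a, ball1_Kn (absK i) (n i) a <-> Z i (phi i a))
  (P4 : forall i U, nbhs0_Kn (absK i) (n i) U -> nbhs (0 : V i) [set v | U (g i v)])
  (P5 : forall i U, nbhs (0 : V i) U -> nbhs0_Kn (absK i) (n i) [set a | U (phi i a)]).

Lemma phi0 i : phi i 0 = 0.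
Proof. by apply: (@addrI _ (phi i 0)); rewrite -phiD !addr0. Qed.
Lemma phiN i a : phi i (- a) = - phi i a.
Proof. by apply/eqP; rewrite -addr_eq0 -phiD addNr phi0. Qed.
Lemma phiB i a b : phi i (a - b) = phi i a - phi i b.
Proof. by rewrite phiD phiN. Qed.
Lemma gB i u v : g i (u - v) = g i u - g i v.
Proof. by apply: (can_inj (phiK i)); rewrite phiB !gK. Qed.
Lemma gD i u v : g i (u + v) = g i u + g i v.
Proof. by apply: (can_inj (phiK i)); rewrite phiD !gK. Qed.
Lemma gZ i c v : g i (smul i c v) = c *: g i v.
Proof. by apply: (can_inj (phiK i)); rewrite phiZ !gK. Qed.
Lemma hballg i v : ball1_Kn (absK i) (n i) (g i v) <-> Z i v.
Proof. by rewrite (hball i (g i v)) gK. Qed.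

Definition fmap (x : forall i, V i) : forall i, 'rV[K i]_(n i) := fun i => g i (x i).

Lemma rp_fmap x : rp Z x -> rp (fun i => ball1_Kn (absK i) (n i)) (fmap x).
Proof.
by move=> hx; apply: sub_finite_set hx => i /= h zi; apply: h; apply/hballg.
Qed.

Lemma rp_phi y : rp (fun i => ball1_Kn (absK i) (n i)) y -> rp Z (fun i => phi i (y i)).
Proof.
by move=> hy; apply: sub_finite_set hy => i /= h b; apply: h; apply/hball.
Qed.

Lemma assemble : rp_iso Sigma (fun i r x => smul i (ratr r) x) (fun i r v => ratr r *: v)
    (fun i => nbhs (0 : V i)) Z
    (fun i => nbhs0_Kn (absK i) (n i)) (fun i => ball1_Kn (absK i) (n i)) fmap.
Proof.
split; split.
- by move=> x hx; apply: rp_fmap.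
- move=> x y hx hy e; apply: functional_extensionality_dep => i.
  have := f_equal (fun F => F i) e; rewrite /fmap /= => ei.
  by rewrite -(gK i (x i)) ei gK.
- move=> y hy; exists (fun i => phi i (y i)); first exact: rp_phi.
  by apply: functional_extensionality_dep => i; rewrite /fmap phiK.
- move=> x y _ _; apply: functional_extensionality_dep => i.
  by rewrite /fmap /padd gD.
- move=> r x _ _; apply: functional_extensionality_dep => i.
  by rewrite /fmap gZ.
- move=> A [hAsub hA]; split; first by move=> x [].
  move=> x [rx Afx]; have [U' [hU'0 hU'fin] hU'] := hA _ Afx.
  exists (fun i => [set v | U' i (g i v)]).
    split; first by move=> i; apply: P4.
    apply: sub_finite_set hU'fin => i /= hne e; apply: hne; rewrite e.
    by apply: funext => v; apply: propext; exact: hballg.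
  move=> y ry hy; split => //; apply: hU'; first exact: rp_fmap.
  by move=> i; rewrite /fmap -gB; exact: hy i.
- move=> A [hAsub hA]; split.
    by move=> _ [x Ax <-]; apply: rp_fmap; apply: hAsub.
  move=> _ [x Ax <-]; have [U [hU0 hUfin] hU] := hA _ Ax.
  exists (fun i => [set a | U i (phi i a)]).
    split; first by move=> i; apply: P5.
    apply: sub_finite_set hUfin => i /= hne e; apply: hne; rewrite e.
    by apply: funext => a; apply: propext; split => h; apply/hball.
  move=> y' ry' hy'; exists (fun i => phi i (y' i)).
    apply: hU; first exact: rp_phi.
    by move=> i; have := hy' i; rewrite /= phiB /fmap gK.
  by apply: functional_extensionality_dep => i; rewrite /fmap phiK.
Qed.
End Assembly.

Lemma nss (Sigma : pred nat) (HSigma : forall q, Sigma q -> prime q)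
  (K : idx Sigma -> fieldType) (absK : forall i, K i -> rat)
  (HK : forall i, is_Qq_model (val i) (absK i))
  (V : idx Sigma -> topologicalZmodType)
  (HV : forall i, hausdorff_space (V i) /\ locally_compact [set: V i])
  (smul : forall i, K i -> V i -> V i)
  (Hsmul : forall i, is_top_vspace (absK i) (smul i))
  (Z : forall i, set (V i))
  (HZ : forall i, compact_open_subgroup (Z i)) :
  no_small_submodules Sigma (fun i r x => smul i (ratr r) x)
       (fun i => nbhs (0 : V i)) Z.
Proof.
exists [set x | forall i, Z i (x i)].
  exists Z; last by move=> y _ hy.
  split; first by move=> i; exact: Znbhs.
  by apply: sub_finite_set (finite_set0 _) => i /=; apply.
move=> M [Mrp M0 MD MN MZ] MW x Mx; apply: functional_extensionality_dep => i.
have hq : prime (val i) := HSigma _ (proj2_sig i).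
pose r : rat := ((val i)%:R)^-1.
have rS : in_ZSinv Sigma r.
  have qz : ((val i)%:Z != 0) by rewrite eqz_nat -lt0n prime_gt0.
  rewrite /in_ZSinv /r pmulrn denqVz //; split; first by rewrite absz_gt0.
  move=> p pp; rewrite absz_nat dvdn_prime2 // => /eqP ->.
  exact: (proj2_sig i).
have hk : forall k, M (fun j => smul j (ratr r ^+ k) (x j)).
  elim => [|k IH].
    have -> : (fun j => smul j (ratr r ^+ 0) (x j)) = x.
      by apply: functional_extensionality_dep => j; rewrite expr0 (smul1 _ _ _ _ (Hsmul j)).
    exact: Mx.
  have := MZ r _ rS IH; congr M; apply: functional_extensionality_dep => j.
  by rewrite /= -(smulM _ _ _ _ (Hsmul j)) exprS.
apply: (@Zk_inter (val i) (K i) (absK i) hq (HK i) (V i) (smul i) (Z i) (HV i).1 (Hsmul i) (HZ i) (x i)) => k.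
rewrite /Zk /qk /= -exprVn -(@ratr_qinv (K i) (val i) (prime_gt0 hq)).
exact: (MW _ (hk k) i).
Qed.

Theorem mainTheorem7
  (Sigma : pred nat) (HSigma : forall q, Sigma q -> prime q)
  (K : idx Sigma -> fieldType) (absK : forall i, K i -> rat)
  (HK : forall i, is_Qq_model (val i) (absK i))
  (V : idx Sigma -> topologicalZmodType)
  (HV : forall i, hausdorff_space (V i) /\ locally_compact [set: V i])
  (smul : forall i, K i -> V i -> V i)
  (Hsmul : forall i, is_top_vspace (absK i) (smul i))
  (Z : forall i, set (V i))
  (HZ : forall i, compact_open_subgroup (Z i)) :
  (exists n : idx Sigma -> nat,
   exists f : (forall i, V i) -> (forall i, 'rV[K i]_(n i)),
     rp_iso Sigma
       (fun i r x => smul i (ratr r) x) (fun i r v => ratr r *: v)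
       (fun i => nbhs (0 : V i)) Z
       (fun i => nbhs0_Kn (absK i) (n i)) (fun i => ball1_Kn (absK i) (n i))
       f)
  /\ no_small_submodules Sigma (fun i r x => smul i (ratr r) x)
       (fun i => nbhs (0 : V i)) Z.
Proof.
split; last exact: nss.
have LS i := @local_structure (val i) (K i) (absK i) (HSigma _ (proj2_sig i)) (HK i)
   (V i) (smul i) (Z i) (HV i).1 (Hsmul i) (HZ i).
pose s1 i := cid (LS i).
pose n i := sval (s1 i).
pose s2 i := cid (svalP (s1 i)).
pose phi i : 'rV[K i]_(n i) -> V i := sval (s2 i).
pose s3 i := cid (svalP (s2 i)).
pose g i : V i -> 'rV[K i]_(n i) := sval (s3 i).
have P i := svalP (s3 i).
exists n, (fun x i => g i (x i)).
apply: (@assemble Sigma K absK V smul Z n phi g).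
- by move=> i; have [[]] := P i.
- by move=> i; have [[]] := P i.
- by move=> i; have [[]] := P i.
- by move=> i; have [[]] := P i.
- by move=> i; have [[]] := P i.
- by move=> i; have [_ []] := P i.
- by move=> i; have [_ []] := P i.
Qed.
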